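(* Let $I\subset S$ be a proper nonzero monomial complete intersection ideal, i.e. its minimal monomial generators form a regular sequence. Then $I$ is $0$-clean.
   Context: $S=K[x_1,\dots,x_n]$, $K$ a field. For a monomial $u=x_1^{a_1}\cdots x_n^{a_n}$, $\mathrm{supp}(u)=\{i:a_i>0\}$. For an ideal $I$, $\min(I)$ is the set of minimal primes of $I$. A monomial $u\neq 1$ with $u\notin I$ is a cleaner monomial of $I$ if $\min(I+Su)\subseteq\min(I)$. For $k\ge 0$, the class of $k$-clean monomial ideals is defined recursively (smallest class closed under the rule): a proper monomial ideal $I$ is $k$-clean if either $I$ is prime, or $I$ has no embedded primes and there is a cleaner monomial $u$ of $I$ with $|\mathrm{supp}(u)|\le k+1$ such that $I:u$ and $I+Su$ are $k$-clean. *)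

(* Defs.v *)
From HB Require Import structures.
From mathcomp Require Import all_boot all_order all_algebra.
Set Implicit Arguments. Unset Strict Implicit. Unset Printing Implicit Defensive.
Import GRing.Theory.
Local Open Scope ring_scope.

Section Ideals.
Variable R : comNzRingType.

Definition is_ideal (I : R -> Prop) : Prop :=
  [/\ I 0, (forall x y, I x -> I y -> I (x + y)) & (forall r x, I x -> I (r * x))].

Definition ideal_gen (A : R -> Prop) : R -> Prop :=
  fun x => forall J, is_ideal J -> (forall a, A a -> J a) -> J x.

Definition proper_id (I : R -> Prop) : Prop := ~ I 1.

Definition add_elt (I : R -> Prop) (u : R) : R -> Prop :=
  ideal_gen (fun x => I x \/ x = u).

Definition colon (I : R -> Prop) (u : R) : R -> Prop := fun x => I (x * u).

Definition is_prime (P : R -> Prop) : Prop :=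
  [/\ is_ideal P, proper_id P & forall a b, P (a * b) -> P a \/ P b].

Definition subset_pred (I J : R -> Prop) : Prop := forall x, I x -> J x.

Definition min_prime (I P : R -> Prop) : Prop :=
  [/\ is_prime P, subset_pred I P &
      forall Q, is_prime Q -> subset_pred I Q -> subset_pred Q P -> subset_pred P Q].

Definition ass_prime (I P : R -> Prop) : Prop :=
  is_prime P /\ exists f : R, forall x, P x <-> I (x * f).

Definition no_embedded_primes (I : R -> Prop) : Prop :=
  forall P, ass_prime I P -> min_prime I P.

Definition regular_seq (fs : seq R) : Prop :=
  proper_id (ideal_gen (fun x => x \in fs)) /\
  forall i, (i < size fs)%N -> forall x,
    ideal_gen (fun y => y \in take i fs) (nth 0 fs i * x) ->
    ideal_gen (fun y => y \in take i fs) x.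
End Ideals.

(* Realised as the iterated univariate polynomial ring K[x_0][x_1]...[x_(n-1)]. *)
Fixpoint mpoly (K : fieldType) (n : nat) : comNzRingType :=
  match n with
  | 0 => K
  | m.+1 => ({poly mpoly K m} : comNzRingType)
  end.

(* the variable x_i in K[x_0,...,x_(m-1)] (0 if i >= m, never used) *)
Fixpoint var (K : fieldType) (m : nat) (i : nat) : mpoly K m :=
  match m return mpoly K m with
  | 0 => 0
  | m'.+1 => if i == m' then ('X : {poly mpoly K m'}) else (var K m' i)%:P
  end.

Definition expo (n : nat) := {ffun 'I_n -> nat}.

Definition mono (K : fieldType) (n : nat) (a : expo n) : mpoly K n :=
  \prod_(i < n) var K n i ^+ a i.

Definition supp (n : nat) (a : expo n) : {set 'I_n} := [set i | (0 < a i)%N].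

(* componentwise order = divisibility of monomials *)
Definition expo_le (n : nat) (a b : expo n) : bool := [forall i, (a i <= b i)%N].

Definition monomial_ideal (K : fieldType) (n : nat) (I : mpoly K n -> Prop) : Prop :=
  exists A : expo n -> Prop,
    forall x, I x <-> ideal_gen (fun y => exists2 a, A a & y = mono K a) x.

Definition cleaner (K : fieldType) (n : nat) (I : mpoly K n -> Prop) (a : expo n) : Prop :=
  [/\ mono K a <> 1, ~ I (mono K a) &
      forall P, min_prime (add_elt I (mono K a)) P -> min_prime I P].

Inductive kclean (K : fieldType) (n : nat) (k : nat) : (mpoly K n -> Prop) -> Prop :=
| kclean_prime (I : mpoly K n -> Prop) :
    monomial_ideal I -> proper_id I -> is_prime I -> @kclean K n k I
| kclean_step (I : mpoly K n -> Prop) (a : expo n) :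
    monomial_ideal I -> proper_id I -> no_embedded_primes I ->
    cleaner I a -> (#|supp a| <= k.+1)%N ->
    @kclean K n k (colon I (mono K a)) -> @kclean K n k (add_elt I (mono K a)) ->
    @kclean K n k I.

(* Main.v *)
Require Import Defs.
From mathcomp Require Import all_boot all_order all_algebra.
From Stdlib Require Import FunctionalExtensionality PropExtensionality Classical.
From mathcomp Require Import zify.
Set Implicit Arguments. Unset Strict Implicit. Unset Printing Implicit Defensive.
Import GRing.Theory.
Local Open Scope ring_scope.

Section S.
Variable K : fieldType.

Definition lower n (a : expo n.+1) : expo n := [ffun i => a (lift ord_max i)].
Definition top n (a : expo n.+1) : nat := a ord_max.
Definition ext n (b : expo n) (t : nat) : expo n.+1 :=
  [ffun j : 'I_n.+1 => if unlift ord_max j is Some j' then b j' else t].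

Lemma lower_ext n (b : expo n) t : lower (ext b t) = b.
Proof. by apply/ffunP => i; rewrite !ffunE liftK. Qed.
Lemma top_ext n (b : expo n) t : top (ext b t) = t.
Proof. by rewrite /top ffunE unlift_none. Qed.
Lemma ext_lt n (a : expo n.+1) : ext (lower a) (top a) = a.
Proof.
apply/ffunP => j; rewrite ffunE; case: unliftP => [j'|] -> //.
by rewrite ffunE.
Qed.

Lemma expo_leP n (a b : expo n) : reflect (forall i, (a i <= b i)%N) (expo_le a b).
Proof. exact: forallP. Qed.

Lemma expo_le_ext n (b b' : expo n) t t' :
  expo_le (ext b t) (ext b' t') = expo_le b b' && (t <= t')%N.
Proof.
apply/expo_leP/andP => [H|[/expo_leP H1 H2] j].
  split; last by have := H ord_max; rewrite !ffunE unlift_none.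
  by apply/expo_leP => i; have := H (lift ord_max i); rewrite !ffunE liftK.
by rewrite !ffunE; case: unliftP => [j'|] _.
Qed.

Lemma expo_le_refl n (a : expo n) : expo_le a a.
Proof. by apply/expo_leP. Qed.

Lemma expo0 (a : expo 0) : a = [ffun => 0%N].
Proof. by apply/ffunP => -[]. Qed.

Fixpoint MI (n : nat) : (expo n -> Prop) -> mpoly K n -> Prop :=
  match n return (expo n -> Prop) -> mpoly K n -> Prop with
  | 0 => fun U f => U [ffun => 0%N] \/ f = 0
  | m.+1 => fun U f => forall i : nat, MI (fun b => U (ext b i)) (f : {poly mpoly K m})`_i
  end.

Definition upc n (U : expo n -> Prop) := forall a b, expo_le a b -> U a -> U b.

Lemma MI_mono n (U V : expo n -> Prop) : (forall a, U a -> V a) ->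
  forall f, MI U f -> MI V f.
Proof.
elim: n U V => [|n IH] U V HUV f /=; first by case; [left; apply: HUV|right].
move=> H i; apply: (IH _ _ _ _ (H i)) => b; exact: HUV.
Qed.

Lemma MI0 n (U : expo n -> Prop) : MI U 0.
Proof. elim: n U => [|n IH] U /=; first by right. by move=> i; rewrite coef0. Qed.

Lemma MIT n (f : mpoly K n) : MI (fun _ => True) f.
Proof. elim: n f => [|n IH] f /=; first by left. by move=> i; apply: IH. Qed.

Lemma MI_add n (U : expo n -> Prop) f g : MI U f -> MI U g -> MI U (f + g).
Proof.
elim: n U f g => [|n IH] U f g /=.
  by case=> [Hu|->]; [left|case=> [Hu|->]; [left|right; rewrite addr0]].
by move=> Hf Hg i; rewrite coefD; apply: IH.
Qed.

Lemma MI_sum n (U : expo n -> Prop) (I : Type) (r : seq I) (P : pred I) F :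
  (forall i, P i -> MI U (F i)) -> MI U (\sum_(i <- r | P i) F i).
Proof.
move=> H; apply: (big_ind (MI U)) => //; [exact: MI0 | exact: MI_add].
Qed.

Lemma upc_ext n (U : expo n.+1 -> Prop) i : upc U -> upc (fun b => U (ext b i)).
Proof. by move=> H a b Hab; apply: H; rewrite expo_le_ext Hab leqnn. Qed.

Lemma MI_mul n (U : expo n -> Prop) r f : upc U -> MI U f -> MI U (r * f).
Proof.
elim: n U r f => [|n IH] U r f HU /=.
  by case=> [Hu|->]; [left|right; rewrite mulr0].
move=> Hf i; rewrite coefM; apply: MI_sum => j _.
apply: (MI_mono (U := fun b => U (ext b (i - j)%N))).
  by move=> b; apply: HU; rewrite expo_le_ext expo_le_refl leq_subr.
by apply: IH; [exact: upc_ext | exact: Hf].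
Qed.

Lemma MI_ideal n (U : expo n -> Prop) : upc U -> is_ideal (MI U).
Proof. by move=> HU; split; [exact: MI0|exact: MI_add|move=> r x; exact: MI_mul]. Qed.

Lemma MI_opp n (U : expo n -> Prop) f : upc U -> MI U f -> MI U (- f).
Proof. by move=> HU Hf; rewrite -mulN1r; apply: MI_mul. Qed.

Lemma monoS n (a : expo n.+1) :
  mono K a = (mono K (lower a))%:P * 'X^(top a) :> {poly mpoly K n}.
Proof.
rewrite /mono big_ord_recr /= eqxx.
congr (_ * _); rewrite rmorph_prod; apply: eq_bigr => i _.
rewrite rmorphXn /= ffunE ifN ?neq_ltn ?ltn_ord //.
have -> : widen_ord (leqnSn n) i = lift ord_max i by apply: val_inj; rewrite /= /bump leqNgt ltn_ord.
by [].
Qed.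

Lemma mono_0 (a : expo 0) : mono K a = 1.
Proof. by rewrite /mono big_ord0. Qed.

Lemma MI_monoP n (U : expo n -> Prop) a : MI U (mono K a) <-> U a.
Proof.
elim: n U a => [|n IH] U a /=.
  rewrite mono_0 (expo0 a); split; [by case=> // /eqP; rewrite oner_eq0|by left].
rewrite monoS; split.
  move=> /(_ (top a)); rewrite coefCM coefXn eqxx mulr1 => /IH.
  by rewrite ext_lt.
move=> Ha i; rewrite coefCM coefXn; case: eqP => [->|_].
  by rewrite mulr1; apply/IH; rewrite ext_lt.
by rewrite mulr0; apply: MI0.
Qed.

Section IG.
Variable R : comNzRingType.
Lemma ig_ideal (A : R -> Prop) : is_ideal (ideal_gen A).
Proof.
split.
- by move=> J [] .
- by move=> x y Hx Hy J HJ HA; case: (HJ) => _ Hadd _; apply: Hadd; [apply: Hx|apply: Hy].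
- by move=> r x Hx J HJ HA; case: (HJ) => _ _ Hmul; apply: Hmul; apply: Hx.
Qed.
Lemma ig_sub (A : R -> Prop) x : A x -> ideal_gen A x.
Proof. by move=> Hx J _ HA; apply: HA. Qed.
Lemma ig_min (A J : R -> Prop) : is_ideal J -> (forall x, A x -> J x) ->
  forall x, ideal_gen A x -> J x.
Proof. by move=> HJ HA x Hx; apply: Hx. Qed.
End IG.

Definition monos n (A : expo n -> Prop) : mpoly K n -> Prop :=
  fun y => exists2 a, A a & y = mono K a.
Definition up n (A : expo n -> Prop) : expo n -> Prop :=
  fun b => exists2 a, A a & expo_le a b.

Lemma expo_le_trans n (a b c : expo n) : expo_le a b -> expo_le b c -> expo_le a c.
Proof.
by move=> /expo_leP H1 /expo_leP H2; apply/expo_leP => i; apply: leq_trans (H1 i) (H2 i).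
Qed.

Lemma upc_up n (A : expo n -> Prop) : upc (up A).
Proof. by move=> a b Hab [c Hc Hca]; exists c => //; apply: expo_le_trans Hab. Qed.

Lemma MI_gen_l n (A : expo n -> Prop) f : ideal_gen (monos A) f -> MI (up A) f.
Proof.
apply: ig_min; first exact/MI_ideal/upc_up.
by move=> y [a Ha ->]; apply/MI_monoP; exists a => //; apply: expo_le_refl.
Qed.

Lemma MI_gen_r n (A : expo n -> Prop) f : MI (up A) f -> ideal_gen (monos A) f.
Proof.
elim: n A f => [|n IH] A f /=.
  case=> [[a Ha _]|->]; last by case: (ig_ideal (monos A)).
  have H1 : ideal_gen (monos A) 1 by apply: ig_sub; exists a; rewrite ?mono_0.
  by rewrite -[f]mulr1; case: (ig_ideal (monos A)) => _ _ Hm; apply: Hm.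
move=> Hf.
rewrite -[f]coefK poly_def.
apply: (big_ind (ideal_gen (monos A))).
- by case: (ig_ideal (monos A)).
- by case: (ig_ideal (monos A)).
move=> i _; rewrite -mul_polyC.
pose A' := fun c : expo n => exists2 a, A a & lower a = c /\ (top a <= i)%N.
have H1 : ideal_gen (monos A') f`_i.
  apply: IH; apply: (MI_mono _ (Hf i)) => b [a Ha Hab].
  rewrite -(ext_lt a) expo_le_ext in Hab; case/andP: Hab => H1 H2.
  exists (lower a) => //; exists a => //; by rewrite top_ext.
pose J := fun c : mpoly K n => ideal_gen (monos A) (c%:P * 'X^i : mpoly K n.+1).
have HJ : is_ideal J.
  case: (ig_ideal (monos A)) => H0 Ha Hm; split.
  - by rewrite /J mul0r.
  - by move=> x y Hx Hy; rewrite /J polyCD mulrDl; apply: Ha.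
  - by move=> r x Hx; rewrite /J polyCM -mulrA; apply: Hm.
apply: (ig_min HJ) H1 => y [c [a Ha [<- Hle]] ->].
rewrite /J -(subnKC Hle) exprD mulrA -monoS mulrC.
case: (ig_ideal (monos A)) => _ _ Hm; apply: Hm; apply: ig_sub; by exists a.
Qed.

Lemma pext (T : Type) (P Q : T -> Prop) : (forall x, P x <-> Q x) -> P = Q.
Proof.
move=> H; apply: functional_extensionality => x.
by apply: propositional_extensionality.
Qed.

Lemma MI_gen n (A : expo n -> Prop) : ideal_gen (monos A) = MI (up A).
Proof. by apply: pext => f; split; [apply: MI_gen_l|apply: MI_gen_r]. Qed.

Definition eadd n (a b : expo n) : expo n := [ffun i => (a i + b i)%N].

Lemma eadd_ext n (b : expo n) j (a : expo n.+1) :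
  eadd (ext b j) a = ext (eadd b (lower a)) (j + top a).
Proof.
apply/ffunP => i; rewrite !ffunE; case: unliftP => [i'|] -> /=; rewrite ?ffunE //.
Qed.

Lemma MI_colon n (U : expo n -> Prop) (a : expo n) f :
  MI U (f * mono K a) <-> MI (fun b => U (eadd b a)) f.
Proof.
elim: n U a f => [|n IH] U a f /=.
  by rewrite mono_0 mulr1 [eadd _ a]expo0.
rewrite monoS mulrA; split.
  move=> H j; have := H (j + top a)%N.
  rewrite coefMXn ltnNge leq_addl /= addnK coefMC => /IH.
  by apply: MI_mono => b; rewrite eadd_ext.
move=> H i; rewrite coefMXn; case: ltnP => Hi; first exact: MI0.
rewrite coefMC; apply/IH.
have := H (i - top a)%N; apply: MI_mono => b.
by rewrite eadd_ext subnK.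
Qed.

Definition meets n (p : pred 'I_n) : expo n -> Prop := fun b => exists2 k, p k & (0 < b k)%N.

Lemma upc_meets n (p : pred 'I_n) : upc (meets p).
Proof.
move=> a b /expo_leP Hab [k Hk Ha]; exists k => //; exact: leq_trans Ha (Hab k).
Qed.

Definition e0 n : expo n := [ffun => 0%N].
Definition unit n (k : 'I_n) : expo n := [ffun i => (i == k) : nat].

Lemma mono_zero n : mono K (e0 n) = 1.
Proof. by rewrite /mono big1 // => i _; rewrite ffunE expr0. Qed.

Lemma mono_unit n (k : 'I_n) : mono K (unit k) = var K n k.
Proof.
rewrite /mono (bigD1 k) //= big1 ?mulr1 => [|i Hi]; first by rewrite ffunE eqxx expr1.
by rewrite ffunE (negbTE Hi) expr0.
Qed.

Lemma max_ex (P : nat -> Prop) N : (forall i, (N <= i)%N -> ~ P i) -> (exists i, P i) ->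
  exists i, P i /\ forall j, (i < j)%N -> ~ P j.
Proof.
elim: N => [|N IH] HN [i Hi]; first by case: (HN i (leq0n i)).
case: (classic (P N)) => HPN; first by exists N; split => // j Hj; apply: HN.
apply: IH; last by exists i.
move=> j; rewrite leq_eqVlt; case/orP => [/eqP <-|]; [by []|exact: HN].
Qed.

Lemma meets_ext n (p : pred 'I_n.+1) b i :
  meets p (ext b i) <-> meets (fun k => p (lift ord_max k)) b \/ (p ord_max /\ (0 < i)%N).
Proof.
split.
  case=> k Hk; rewrite ffunE; case: unliftP => [k'|] Ek; rewrite Ek in Hk => Hb.
    by left; exists k'.
  by right.
case=> [[k Hk Hb]|[Hp Hi]]; first by exists (lift ord_max k); rewrite // ffunE liftK.
by exists ord_max; rewrite // ffunE unlift_none.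
Qed.

Lemma QT_mul n (p : pred 'I_n) f g :
  ~ MI (meets p) f -> ~ MI (meets p) g -> ~ MI (meets p) (f * g).
Proof.
elim: n p f g => [|n IH] p f g /=.
  have Hm : ~ meets p [ffun => 0%N] by case=> -[].
  move=> Hf Hg [//|/eqP]; rewrite mulf_eq0 => /orP[] /eqP H.
    by apply: Hf; right.
  by apply: Hg; right.
set p' := fun k => p (lift ord_max k).
have Heq : forall i (h : mpoly K n), (i = 0%N \/ ~~ p ord_max) ->
    (MI (fun b => meets p (ext b i)) h <-> MI (meets p') h).
  move=> i h Hi; split; apply: MI_mono => b.
    case/meets_ext => // -[Hp Hi']; exfalso; case: Hi => [Hi|/negP]; last by [].
    by rewrite Hi in Hi'.
  by move=> H; apply/meets_ext; left.
case: (boolP (p ord_max)) => Hmax.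
  have Htriv : forall i (h : mpoly K n), (0 < i)%N -> MI (fun b => meets p (ext b i)) h.
    move=> i h Hi; apply: (MI_mono _ (MIT h)) => b _; apply/meets_ext; by right.
  have H0 : forall h : {poly mpoly K n}, ~ (forall i, MI (fun b => meets p (ext b i)) h`_i) ->
      ~ MI (meets p') h`_0.
    move=> h Hh H0; apply: Hh => i; case: i => [|i]; first by apply/Heq; [left|].
    exact: Htriv.
  move=> Hf Hg Hfg; apply: (IH p' _ _ (H0 _ Hf) (H0 _ Hg)).
  by rewrite -coef0M; apply/(Heq 0%N); [left|apply: Hfg].
have Heq' : forall (h : {poly mpoly K n}),
    (forall i, MI (fun b => meets p (ext b i)) h`_i) <-> forall i, MI (meets p') h`_i.
  by move=> h; split => H i; [apply/Heq; [right|apply: H] | apply/(Heq i); [right|apply: H]].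
have Hmax' : forall h : {poly mpoly K n}, ~ (forall i, MI (fun b => meets p (ext b i)) h`_i) ->
    exists i, ~ MI (meets p') h`_i /\ forall j, (i < j)%N -> MI (meets p') h`_j.
  move=> h Hh.
  have [i [Hi Hj]] : exists i, ~ MI (meets p') h`_i /\ forall j, (i < j)%N -> ~ ~ MI (meets p') h`_j.
    apply: (@max_ex _ (size h)).
      by move=> i Hi; rewrite nth_default //; apply; apply: MI0.
    apply: not_all_ex_not => H; apply: Hh; apply/Heq' => i; exact: H.
  by exists i; split => // j Hij; apply: NNPP; apply: Hj.
move=> Hf Hg; have [i [Hi Hi']] := Hmax' _ Hf; have [j [Hj Hj']] := Hmax' _ Hg.
move/Heq' => /(_ (i + j)%N); rewrite coefM.
have Hi0 : (i < (i + j).+1)%N by rewrite ltnS leq_addr.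
rewrite (bigD1 (Ordinal Hi0)) //= addKn => H.
have Hrest : MI (meets p') (\sum_(l < (i + j).+1 | l != Ordinal Hi0) f`_l * g`_(i + j - l)).
  apply: MI_sum => l Hl.
  have Hli : (l : nat) != i by apply: contra Hl => /eqP Hl; apply/eqP/val_inj.
  case: (ltngtP l i) Hli => // Hlt _.
    apply: MI_mul; first exact: upc_meets.
    by apply: Hj'; rewrite -(ltn_add2l l) subnKC ?ltn_add2r // -ltnS ltn_ord.
  by rewrite mulrC; apply: MI_mul; [exact: upc_meets|apply: Hi'].
apply: (IH p' _ _ Hi Hj).
have -> : f`_i * g`_j = (f`_i * g`_j + \sum_(l < (i + j).+1 | l != Ordinal Hi0) f`_l * g`_(i + j - l))
   - \sum_(l < (i + j).+1 | l != Ordinal Hi0) f`_l * g`_(i + j - l) by rewrite addrK.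
by apply: MI_add => //; apply: MI_opp => //; exact: upc_meets.
Qed.

Definition QT n (p : pred 'I_n) := MI (meets p).

Lemma QT_prime n (p : pred 'I_n) : is_prime (QT p).
Proof.
split; first exact/MI_ideal/upc_meets.
  rewrite /proper_id -(mono_zero n) => /MI_monoP [k _]; by rewrite ffunE.
move=> a b Hab; case: (classic (QT p a)) => Ha; first by left.
case: (classic (QT p b)) => Hb; first by right.
by case: (QT_mul Ha Hb).
Qed.

Lemma expo_le_unit n (k : 'I_n) b : expo_le (unit k) b <-> (0 < b k)%N.
Proof.
split; first by move/expo_leP/(_ k); rewrite ffunE eqxx.
by move=> H; apply/expo_leP => i; rewrite ffunE; case: eqP => [->|].
Qed.

Lemma QT_var n (p : pred 'I_n) (k : 'I_n) : QT p (var K n k) <-> p k.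
Proof.
rewrite /QT -mono_unit; split.
  by move/MI_monoP => [j Hj]; rewrite ffunE; case: eqP => [<-|].
by move=> Hk; apply/MI_monoP; exists k; rewrite // ffunE eqxx.
Qed.

Definition units n (p : pred 'I_n) : expo n -> Prop := fun a => exists2 k, p k & a = unit k.

Lemma QT_gen n (p : pred 'I_n) : QT p = ideal_gen (monos (units p)).
Proof.
rewrite MI_gen /QT; congr MI; apply: pext => b; split.
  by move=> [k Hk Hb]; exists (unit k); [exists k|apply/expo_le_unit].
by move=> [a [k Hk ->] /expo_le_unit Hb]; exists k.
Qed.

Lemma prime_ideal (R : comNzRingType) (P : R -> Prop) : is_prime P -> is_ideal P.
Proof. by case. Qed.

Lemma prime_big (R : comNzRingType) (P : R -> Prop) (I : finType) (F : I -> R) :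
  is_prime P -> P (\prod_(i : I) F i) -> exists i, P (F i).
Proof.
move=> [_ Hp Hm].
apply: (big_ind (fun x => P x -> exists i, P (F i))).
- by move=> H1; case: (Hp H1).
- by move=> x y Hx Hy /Hm [/Hx|/Hy].
- by move=> i _ Hi; exists i.
Qed.

Lemma prime_exp (R : comNzRingType) (P : R -> Prop) (x : R) m :
  is_prime P -> P (x ^+ m) -> (0 < m)%N /\ P x.
Proof.
move=> [_ Hp Hm]; elim: m => [|m IH]; first by rewrite expr0 => /Hp.
rewrite exprS => /Hm [//|/IH [_ //]].
Qed.

Lemma prime_mono n (P : mpoly K n -> Prop) a :
  is_prime P -> P (mono K a) -> exists k, (0 < a k)%N /\ P (var K n k).
Proof.
move=> HP /(prime_big HP) [k /(prime_exp HP) Hk]; by exists k.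
Qed.

Definition nz n (a : expo n) := exists k, (0 < a k)%N.
Definition disj n (a b : expo n) := forall k, a k = 0%N \/ b k = 0%N.
Definition ok n (L : seq (expo n)) :=
  (forall h, h \in L -> nz h) /\
  (forall h h', h \in L -> h' \in L -> h <> h' -> disj h h').
Definition upL n (L : seq (expo n)) := up (fun a => a \in L).
Definition IL n (L : seq (expo n)) := MI (upL L).
Definition tr n (L : seq (expo n)) (p : pred 'I_n) :=
  [/\ (forall h, h \in L -> exists2 k, p k & (0 < h k)%N),
      (forall h, h \in L -> forall k j, p k -> p j -> (0 < h k)%N -> (0 < h j)%N -> k = j) &
      (forall k, p k -> exists2 h, h \in L & (0 < h k)%N)].

Lemma IL_gen n (L : seq (expo n)) : IL L = ideal_gen (monos (fun a => a \in L)).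
Proof. by rewrite MI_gen. Qed.

Lemma IL_ideal n (L : seq (expo n)) : is_ideal (IL L).
Proof. exact/MI_ideal/upc_up. Qed.

Lemma IL_mono n (L : seq (expo n)) h : h \in L -> IL L (mono K h).
Proof. by move=> Hh; apply/MI_monoP; exists h => //; apply: expo_le_refl. Qed.

Lemma F2 n (L : seq (expo n)) p : tr L p -> min_prime (IL L) (QT p).
Proof.
move=> [T1 T2 T3]; split; first exact: QT_prime.
  apply: MI_mono => b [h /T1 [k Hk Hh] /expo_leP Hb]; exists k => //.
  exact: leq_trans Hh (Hb k).
move=> Q HQ HIQ HQT; rewrite QT_gen; apply: ig_min; first exact: prime_ideal HQ.
move=> y [a [k Hk ->] ->]; rewrite mono_unit.
have [h Hh Hhk] := T3 k Hk.
have [j [Hhj HQj]] := prime_mono HQ (HIQ _ (IL_mono Hh)).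
have /QT_var Hj := HQT _ HQj.
by rewrite (T2 h Hh k j Hk Hj Hhk Hhj).
Qed.

Lemma ok_cons n (g : expo n) L : ok (g :: L) -> ok L.
Proof.
move=> [H1 H2]; split=> [h Hh|h h' Hh Hh']; first by apply: H1; rewrite in_cons Hh orbT.
by apply: H2; rewrite in_cons ?Hh ?Hh' orbT.
Qed.

Lemma disj_pos n (a b : expo n) j : disj a b -> (0 < a j)%N -> (0 < b j)%N -> False.
Proof. by move=> /(_ j) [->|->]. Qed.

Lemma F1 n (L : seq (expo n)) (P : mpoly K n -> Prop) : ok L ->
  (forall h, h \in L -> exists k, (0 < h k)%N /\ P (var K n k)) ->
  exists p, tr L p /\ forall k, p k -> P (var K n k).
Proof.
elim: L => [|g L IH] Hok HL.
  by exists (fun _ => false); split => //; split.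
have [p [[T1 T2 T3] Hp]] : exists p, tr L p /\ forall k, p k -> P (var K n k).
  by apply: IH; [exact: ok_cons Hok|move=> h Hh; apply: HL; rewrite in_cons Hh orbT].
case: (boolP (g \in L)) => Hg.
  exists p; split => //; split.
  - by move=> h; rewrite in_cons => /orP[/eqP ->|]; [apply: T1|apply: T1].
  - by move=> h; rewrite in_cons => /orP[/eqP ->|]; [apply: T2|apply: T2].
  - by move=> k /T3 [h Hh Hhk]; exists h; rewrite ?in_cons ?Hh ?orbT.
have Hdis : forall h, h \in L -> forall j, (0 < g j)%N -> (0 < h j)%N -> False.
  move=> h Hh j; apply: disj_pos; case: Hok => _; apply; rewrite ?in_cons ?Hh ?eqxx ?orbT //.
  by move=> E; move: Hg; rewrite E Hh.
have [k [Hk HPk]] := HL g (mem_head _ _).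
exists (fun j => (j == k) || p j); split; last first.
  by move=> j /orP[/eqP ->|/Hp].
split.
- move=> h; rewrite in_cons => /orP[/eqP ->|Hh]; first by exists k; rewrite ?eqxx.
  by have [j Hj Hhj] := T1 h Hh; exists j; rewrite ?Hj ?orbT.
- move=> h; rewrite in_cons => /orP[/eqP ->|Hh] k1 k2.
    have E : forall j, (j == k) || p j -> (0 < g j)%N -> j = k.
      move=> j /orP[/eqP //|/T3 [h' Hh' Hh'j] Hgj]; case: (Hdis _ Hh' _ Hgj Hh'j).
    by move=> H1 H2 G1 G2; rewrite (E _ H1 G1) (E _ H2 G2).
  have E : forall j, (j == k) || p j -> (0 < h j)%N -> p j.
    move=> j /orP[/eqP ->|//] Hhk; case: (Hdis _ Hh _ Hk Hhk).
  by move=> H1 H2 G1 G2; apply: (T2 h Hh); [apply: E|apply: E|..].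
- move=> j /orP[/eqP ->|/T3 [h Hh Hhj]]; first by exists g; rewrite ?mem_head.
  by exists h; rewrite ?in_cons ?Hh ?orbT.
Qed.

Lemma F3 n (L : seq (expo n)) P : ok L -> min_prime (IL L) P ->
  exists p, tr L p /\ P = QT p.
Proof.
move=> Hok [HP HIP Hmin].
have [p [Htr Hp]] : exists p, tr L p /\ forall k, p k -> P (var K n k).
  apply: F1 => // h Hh; exact: prime_mono HP (HIP _ (IL_mono Hh)).
exists p; split => //.
have HQP : subset_pred (QT p) P.
  rewrite QT_gen; apply: ig_min; first exact: prime_ideal HP.
  by move=> y [a [k Hk ->] ->]; rewrite mono_unit; apply: Hp.
have [HQ HIQ _] := F2 Htr.
apply: pext => x; split; last exact: HQP.
exact: (Hmin _ HQ HIQ HQP).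
Qed.

Definition rest n (L : seq (expo n)) g := filter (predC1 g) L.
Definition wk n (g : expo n) (k : 'I_n) : expo n := [ffun i => (g i - (i == k))%N].

Lemma mem_rest n (L : seq (expo n)) g h : h \in rest L g = (h != g) && (h \in L).
Proof. by rewrite mem_filter. Qed.

Section Nxt.
Variables (n : nat) (L : seq (expo n)) (g : expo n) (k : 'I_n).
Hypotheses (Hok : ok L) (Hg : g \in L) (Hgk : (0 < g k)%N).

Lemma Hdis h : h \in L -> h != g -> disj g h.
Proof. by move=> Hh Hne; case: Hok => _; apply => // E; move: Hne; rewrite E eqxx. Qed.

Lemma up_colon_k b : upL L (eadd b (unit k)) <-> upL (wk g k :: rest L g) b.
Proof.
split.
  move=> [h Hh /expo_leP Hle]; case: (eqVneq h g) => [E|Hne].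
    exists (wk g k); first exact: mem_head.
    apply/expo_leP => i; have := Hle i; rewrite E !ffunE; case: (i == k) => /=; lia.
  exists h; first by rewrite in_cons mem_rest Hne Hh orbT.
  apply/expo_leP => i; have := Hle i; have := Hdis Hh Hne i; rewrite !ffunE.
  have := Hgk; case: eqP => [->|_] /=; lia.
move=> [h]; rewrite in_cons => /orP[/eqP ->|Hh] /expo_leP Hle.
  exists g => //; apply/expo_leP => i; have := Hle i; rewrite !ffunE.
  case: eqP => [->|_] /=; lia.
move: Hh; rewrite mem_rest => /andP[_ Hh]; exists h => //; apply/expo_leP => i; have := Hle i; rewrite !ffunE; lia.
Qed.

Lemma up_colon_w b : upL L (eadd b (wk g k)) <-> upL (unit k :: rest L g) b.
Proof.
split.
  move=> [h Hh /expo_leP Hle]; case: (eqVneq h g) => [E|Hne].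
    exists (unit k); first exact: mem_head.
    apply/expo_leP => i; have := Hle i; rewrite E !ffunE; case: eqP => [->|_] /=; lia.
  exists h; first by rewrite in_cons mem_rest Hne Hh orbT.
  apply/expo_leP => i; have := Hle i; have := Hdis Hh Hne i; rewrite !ffunE.
  case=> ->; lia.
move=> [h]; rewrite in_cons => /orP[/eqP ->|Hh] /expo_leP Hle.
  exists g => //; apply/expo_leP => i; have := Hle i; rewrite !ffunE.
  case: eqP => [->|_] /=; lia.
move: Hh; rewrite mem_rest => /andP[_ Hh]; exists h => //; apply/expo_leP => i; have := Hle i; rewrite !ffunE; lia.
Qed.

Lemma up_add b : upL (unit k :: L) b <-> upL (unit k :: rest L g) b.
Proof.
split.
  move=> [h]; rewrite in_cons => /orP[/eqP ->|Hh] Hle; first by exists (unit k); rewrite ?mem_head.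
  case: (eqVneq h g) => [E|Hne].
    exists (unit k); first exact: mem_head.
    apply: expo_le_trans Hle; rewrite E; exact/expo_le_unit.
  by exists h; rewrite // in_cons mem_rest Hne Hh orbT.
move=> [h]; rewrite in_cons => /orP[/eqP ->|]; first by exists (unit k); rewrite ?mem_head.
by rewrite mem_rest => /andP[_ Hh] Hle; exists h; rewrite // in_cons Hh orbT.
Qed.

Lemma ok_nxt x : expo_le x g -> nz x -> ok (x :: rest L g).
Proof.
move=> /expo_leP Hx Hnz; split.
  move=> h; rewrite in_cons => /orP[/eqP ->//|]; rewrite mem_rest => /andP[_ Hh].
  by case: Hok => H _; apply: H.
have Hd : forall h, h \in rest L g -> disj x h.
  move=> h; rewrite mem_rest => /andP[Hne Hh] i.
  have := Hdis Hh Hne i; have := Hx i; lia.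
move=> h h'; rewrite !in_cons => /orP[/eqP ->|Hh] /orP[/eqP ->|Hh'] Hne //.
- exact: Hd.
- by move=> i; case: (Hd h Hh i); [right|left].
- move: Hh Hh'; rewrite !mem_rest => /andP[_ Hh] /andP[_ Hh'].
  by case: Hok => _; apply.
Qed.

Lemma tr_k p : tr (unit k :: rest L g) p -> tr L p.
Proof.
move=> [T1 T2 T3].
have Eg : forall j, p j -> (0 < g j)%N -> j = k.
  move=> j /T3 [h]; rewrite in_cons => /orP[/eqP ->|]; rewrite ?mem_rest.
    by rewrite ffunE; case: eqP.
  by move=> /andP[Hne Hh] Hhj Hgj; case: (disj_pos (Hdis Hh Hne) Hgj Hhj).
split.
- move=> h Hh; case: (eqVneq h g) => [->|Hne].
    have [j Hj] := T1 _ (mem_head _ _); rewrite ffunE; case: eqP => [E|] //= _.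
    by exists k => //; rewrite -E.
  by apply: T1; rewrite in_cons mem_rest Hne Hh orbT.
- move=> h Hh; case: (eqVneq h g) => [->|Hne].
    by move=> k1 k2 H1 H2 G1 G2; rewrite (Eg _ H1 G1) (Eg _ H2 G2).
  by apply: T2; rewrite in_cons mem_rest Hne Hh orbT.
- move=> j /T3 [h]; rewrite in_cons => /orP[/eqP ->|]; rewrite ?mem_rest.
    by rewrite ffunE; case: eqP => // -> _; exists g.
  by move=> /andP[_ Hh] Hhj; exists h.
Qed.

Lemma tr_w p : tr (wk g k :: rest L g) p -> ~ p k -> tr L p.
Proof.
move=> [T1 T2 T3] Hpk.
have Hwg : forall j, (0 < wk g k j)%N -> (0 < g j)%N by move=> j; rewrite ffunE; lia.
have Hgw : forall j, p j -> (0 < g j)%N -> (0 < wk g k j)%N.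
  move=> j Hj; rewrite ffunE; case: eqP => [E|_]; last by rewrite subn0.
  by rewrite E in Hj.
split.
- move=> h Hh; case: (eqVneq h g) => [->|Hne].
    by have [j Hj /Hwg] := T1 _ (mem_head _ _); exists j.
  by apply: T1; rewrite in_cons mem_rest Hne Hh orbT.
- move=> h Hh; case: (eqVneq h g) => [->|Hne].
    move=> k1 k2 H1 H2 G1 G2; apply: (T2 _ (mem_head _ _)) => //; exact: Hgw.
  by apply: T2; rewrite in_cons mem_rest Hne Hh orbT.
- move=> j /T3 [h]; rewrite in_cons => /orP[/eqP ->|]; rewrite ?mem_rest.
    by move=> /Hwg; exists g.
  by move=> /andP[_ Hh] Hhj; exists h.
Qed.

End Nxt.

Lemma colon_IL n (L : seq (expo n)) a :
  colon (IL L) (mono K a) = MI (fun b => upL L (eadd b a)).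
Proof. by apply: pext => f; rewrite /colon; apply: MI_colon. Qed.

Lemma add_IL n (L : seq (expo n)) a : add_elt (IL L) (mono K a) = IL (a :: L).
Proof.
rewrite !IL_gen /add_elt; apply: pext => f; split; apply: ig_min.
- exact: ig_ideal.
- move=> x [Hx|->]; last by apply: ig_sub; exists a; rewrite ?mem_head.
  move: x Hx; apply: ig_min; first exact: ig_ideal.
  by move=> y [h Hh ->]; apply: ig_sub; exists h; rewrite // in_cons Hh orbT.
- exact: ig_ideal.
- move=> y [h]; rewrite in_cons => /orP[/eqP ->|Hh] ->; apply: ig_sub; first by right.
  by left; apply: ig_sub; exists h.
Qed.

Lemma IL_sub n (O L : seq (expo n)) : (forall h, h \in O -> h \in L) ->
  forall f, IL O f -> IL L f.
Proof. by move=> H; apply: MI_mono => b [h /H Hh Hb]; exists h. Qed.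

Lemma IL_decomp n (O : seq (expo n)) x f : IL (x :: O) f ->
  exists a c, IL O a /\ f = a + mono K x * c.
Proof.
rewrite IL_gen => Hf.
apply: (@ig_min _ _ (fun f => exists a c, IL O a /\ f = a + mono K x * c) _ _ f Hf).
  have [I0 Ia Im] := IL_ideal O; split.
  - by exists 0, 0; rewrite mulr0 addr0.
  - move=> f1 f2 [a1 [c1 [H1 ->]]] [a2 [c2 [H2 ->]]]; exists (a1 + a2), (c1 + c2).
    by split; [apply: Ia|rewrite mulrDr addrACA].
  - move=> r f1 [a1 [c1 [H1 ->]]]; exists (r * a1), (r * c1).
    by split; [apply: Im|rewrite mulrDr mulrCA].
move=> y [h]; rewrite in_cons => /orP[/eqP ->|Hh] ->.
  by exists 0, 1; rewrite mulr1 add0r; split => //; case: (IL_ideal O).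
by exists (mono K h), 0; rewrite mulr0 addr0; split => //; apply: IL_mono.
Qed.

Definition wt n (a : expo n) : nat := \sum_(i < n) a i.
Definition deg n (L : seq (expo n)) : nat := \sum_(h <- L) wt h.

Lemma deg_rest n (L : seq (expo n)) g : g \in L -> (deg (rest L g) + wt g <= deg L)%N.
Proof.
rewrite /deg /rest; elim: L => [//|x L IH].
rewrite in_cons big_cons /= => /orP[/eqP Ex|Hg]; case: eqP => [Exg|Hxg].
- rewrite Exg addnC leq_add2l.
  elim: (L) => [//|y s IHs]; rewrite /= big_cons; case: eqP => _; last by rewrite big_cons leq_add2l.
  exact: leq_trans IHs (leq_addl _ _).
- by rewrite Ex in Hxg.
- rewrite Exg addnC leq_add2l.
  elim: (L) => [//|y s IHs]; rewrite /= big_cons; case: eqP => _; last by rewrite big_cons leq_add2l.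
  exact: leq_trans IHs (leq_addl _ _).
- by rewrite big_cons -addnA leq_add2l; apply: IH.
Qed.

Lemma wt_lt n (x g : expo n) : expo_le x g -> x <> g -> (wt x < wt g)%N.
Proof.
move=> /expo_leP Hle Hne.
have [i Hi] : exists i, x i <> g i.
  apply: not_all_ex_not => H; apply: Hne; apply/ffunP => i; exact: H.
have Hlt : (x i < g i)%N by rewrite ltn_neqAle Hle andbT; apply/eqP.
rewrite /wt (bigD1 i) //= [X in (_ < X)%N](bigD1 i) //= -addSn.
by apply: leq_add => //; apply: leq_sum => j _; apply: Hle.
Qed.

Lemma deg_nxt n (L : seq (expo n)) g x : g \in L -> expo_le x g -> x <> g ->
  (deg (x :: rest L g) < deg L)%N.
Proof.
move=> Hg Hle Hne; rewrite /deg big_cons.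
apply: leq_trans (deg_rest Hg); rewrite addnC ltn_add2l; exact: wt_lt.
Qed.

Lemma unit_le n (g : expo n) k : (0 < g k)%N -> expo_le (unit k) g.
Proof. by move=> H; apply/expo_le_unit. Qed.

Lemma wk_le n (g : expo n) k : expo_le (wk g k) g.
Proof. by apply/expo_leP => i; rewrite ffunE leq_subr. Qed.

Lemma wk_ne n (g : expo n) k : (0 < g k)%N -> wk g k <> g.
Proof. by move=> H E; have := congr1 (fun f : expo n => f k) E; rewrite /= ffunE eqxx; lia. Qed.

Lemma wk_nz n (g : expo n) k : (0 < g k)%N -> g <> unit k -> nz (wk g k).
Proof.
move=> H Hne; apply: NNPP => Hn; apply: Hne; apply/ffunP => i.
have := not_ex_all_not _ _ Hn i; rewrite !ffunE; case: eqP => [->|_] /=; lia.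
Qed.

Lemma unit_nz n (k : 'I_n) : nz (unit k).
Proof. by exists k; rewrite ffunE eqxx. Qed.

Lemma case_units n (L : seq (expo n)) :
  (exists g k, [/\ g \in L, (0 < g k)%N & g <> unit k]) \/
  (forall g, g \in L -> forall k, (0 < g k)%N -> g = unit k).
Proof.
case: (classic (exists g k, [/\ g \in L, (0 < g k)%N & g <> unit k])) => H; first by left.
right => g Hg k Hk; apply: NNPP => Hne; apply: H; by exists g, k.
Qed.

Lemma all_units n (L : seq (expo n)) :
  ok L -> (forall g, g \in L -> forall k, (0 < g k)%N -> g = unit k) ->
  let p0 := fun k => has (fun h : expo n => (0 < h k)%N) L in
  IL L = QT p0 /\ tr L p0.
Proof.
move=> [Hnz _] Hu p0; split.
  congr MI; apply: pext => b; split.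
    move=> [h Hh Hb]; have [k Hk] := Hnz h Hh; exists k; first by apply/hasP; exists h.
    by move: Hb; rewrite (Hu h Hh k Hk) => /expo_le_unit.
  move=> [k /hasP [h Hh Hk] Hb]; exists h => //.
  by rewrite (Hu h Hh k Hk); apply/expo_le_unit.
split.
- by move=> h Hh; have [k Hk] := Hnz h Hh; exists k => //; apply/hasP; exists h.
- move=> h Hh k j _ _ Hk Hj; move: Hj; rewrite (Hu h Hh k Hk) ffunE.
  by case: eqP.
- by move=> k /hasP [h Hh Hk]; exists h.
Qed.

Lemma IL_proper n (L : seq (expo n)) : ok L -> proper_id (IL L).
Proof.
move=> [Hnz _]; rewrite /proper_id -(mono_zero n) => /MI_monoP [h Hh /expo_leP Hle].
by have [k Hk] := Hnz h Hh; have := Hle k; rewrite ffunE; lia.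
Qed.

Lemma ideal_sub_iff (R : comNzRingType) (I : R -> Prop) u v :
  is_ideal I -> I u -> (I (u + v) <-> I v).
Proof.
move=> [H0 Ha Hm] Hu; split => H; last exact: Ha.
have -> : v = (u + v) + (- 1) * u by rewrite mulN1r addrC addKr.
by apply: Ha => //; apply: Hm.
Qed.

Lemma colon_k_IL n (L : seq (expo n)) g k : ok L -> g \in L -> (0 < g k)%N ->
  colon (IL L) (mono K (unit k)) = IL (wk g k :: rest L g).
Proof.
move=> Hok Hg Hgk; rewrite colon_IL /IL; congr MI; apply: pext => b.
exact: up_colon_k.
Qed.

Lemma colon_w_IL n (L : seq (expo n)) g k : ok L -> g \in L -> (0 < g k)%N ->
  colon (IL L) (mono K (wk g k)) = IL (unit k :: rest L g).
Proof.
move=> Hok Hg Hgk; rewrite colon_IL /IL; congr MI; apply: pext => b.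
exact: up_colon_w.
Qed.

Lemma add_k_IL n (L : seq (expo n)) g k : ok L -> g \in L -> (0 < g k)%N ->
  add_elt (IL L) (mono K (unit k)) = IL (unit k :: rest L g).
Proof.
move=> Hok Hg Hgk; rewrite add_IL /IL; congr MI; apply: pext => b.
exact: up_add.
Qed.

Lemma NE n N : forall (L : seq (expo n)), (deg L < N)%N -> ok L ->
  forall f (P : mpoly K n -> Prop), is_prime P -> (forall x, P x <-> IL L (x * f)) ->
  exists p, tr L p /\ P = QT p.
Proof.
elim: N => [//|N IH] L HN Hok f P HP HPf.
case: (case_units L) => [[g [k [Hg Hgk Hne]]]|Hu].
  have HIL := IL_ideal L.
  case: (classic (P (var K n k))) => Hk.
    have := proj1 (HPf _) Hk; rewrite mulrC -mono_unit -/(colon _ _ _) (colon_k_IL Hok Hg Hgk).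
    move=> /IL_decomp [a [c [Ha Ef]]].
    have HOL : forall h, h \in rest L g -> h \in L by move=> h; rewrite mem_rest => /andP[].
    have Hc : forall x, P x <-> IL (unit k :: rest L g) (x * c).
      move=> x; rewrite (HPf x) Ef mulrDr ideal_sub_iff //; last first.
        by case: HIL => _ _ Hm; apply: Hm; apply: IL_sub Ha.
      rewrite -(colon_w_IL Hok Hg Hgk) /colon.
      by rewrite [mono K _ * c]mulrC mulrA.
    have [p [Htr ->]] := IH _ (leq_trans (deg_nxt Hg (unit_le Hgk) (fun E => Hne (esym E))) (ltnSE HN))
      (ok_nxt Hok Hg Hgk (unit_le Hgk) (unit_nz k)) c P HP Hc.
    by exists p; split => //; exact: tr_k Hok Hg Hgk _ Htr.
  have Hc : forall x, P x <-> IL (wk g k :: rest L g) (x * f).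
    move=> x; rewrite -(colon_k_IL Hok Hg Hgk) /colon mono_unit mulrAC -(HPf (x * var K n k)).
    split; first by move=> Hx; case: (prime_ideal HP) => _ _ Hm; rewrite mulrC; apply: Hm.
    by case: HP => _ _ Hm /Hm [].
  have [p [Htr EP]] := IH _ (leq_trans (deg_nxt Hg (wk_le g k) (wk_ne Hgk)) (ltnSE HN))
    (ok_nxt Hok Hg Hgk (wk_le g k) (wk_nz Hgk Hne)) f P HP Hc.
  exists p; split => //; apply: (tr_w Hg Hgk Htr) => Hpk; apply: Hk.
  by rewrite EP; apply/QT_var.
have [HIL Htr] := all_units Hok Hu.
set p0 := fun k => _ in HIL Htr; exists p0; split => //.
rewrite -HIL; apply: pext => x; rewrite HPf.
have HQ : is_prime (IL L) by rewrite HIL; apply: QT_prime.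
have Hf : ~ IL L f by move=> Hf; case: HP => _ HPp _; apply: HPp; apply/HPf; rewrite mul1r.
split; first by case: HQ => _ _ Hm /Hm [].
by move=> Hx; case: (prime_ideal HQ) => _ _ Hm; rewrite mulrC; apply: Hm.
Qed.

Lemma IL_monomial n (L : seq (expo n)) : monomial_ideal (IL L).
Proof. by exists (fun a => a \in L) => x; rewrite IL_gen. Qed.

Lemma supp_unit n (k : 'I_n) : (#|supp (unit k)| <= 1)%N.
Proof.
have -> : supp (unit k) = [set k] by apply/setP => i; rewrite !inE ffunE; case: eqP.
by rewrite cards1.
Qed.

Lemma var_ne1 n (k : 'I_n) : var K n k <> 1.
Proof.
move=> E; have [_ Hp _] := QT_prime (pred1 k); apply: Hp; rewrite -E.
by apply/QT_var; rewrite /= eqxx.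
Qed.

Lemma KC n N : forall (L : seq (expo n)), (deg L < N)%N -> ok L -> @kclean K n 0 (IL L).
Proof.
elim: N => [//|N IH] L HN Hok.
case: (case_units L) => [[g [k [Hg Hgk Hne]]]|Hu]; last first.
  have [HIL Htr] := all_units Hok Hu.
  apply: kclean_prime; [exact: IL_monomial|exact: IL_proper|].
  by rewrite HIL; apply: QT_prime.
apply: (@kclean_step K n 0 (IL L) (unit k)).
- exact: IL_monomial.
- exact: IL_proper.
- move=> P [HP [f Hf]].
  have [p [Htr ->]] := NE (ltnSn _) Hok HP Hf.
  exact: F2.
- split.
  + by rewrite mono_unit; apply: var_ne1.
  + move/MI_monoP => [h Hh /expo_leP Hle].
    have [j Hj] := (proj1 Hok) h Hh.
    have Ej : j = k by have := Hle j; rewrite ffunE; case: eqP => // _; lia.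
    rewrite Ej in Hj; case: (eqVneq h g) => [Ehg|Hhg].
      apply: Hne; apply/ffunP => i; have := Hle i; rewrite -Ehg !ffunE.
      by case: eqP => [->|_] /=; lia.
    exact: disj_pos (Hdis Hok Hg Hh Hhg) Hgk Hj.
  + move=> P; rewrite (add_k_IL Hok Hg Hgk) => /(F3 (ok_nxt Hok Hg Hgk (unit_le Hgk) (unit_nz k))).
    move=> [p [Htr ->]]; apply: F2; exact: tr_k Hok Hg Hgk _ Htr.
- exact: supp_unit.
- rewrite (colon_k_IL Hok Hg Hgk); apply: IH.
    exact: leq_trans (deg_nxt Hg (wk_le g k) (wk_ne Hgk)) (ltnSE HN).
  by have HH := ok_nxt Hok Hg Hgk (wk_le g k) (wk_nz Hgk Hne); exact HH.
- rewrite (add_k_IL Hok Hg Hgk); apply: IH.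
    exact: leq_trans (deg_nxt Hg (unit_le Hgk) (fun E => Hne (esym E))) (ltnSE HN).
  by have HH := ok_nxt Hok Hg Hgk (unit_le Hgk) (unit_nz k); exact HH.
Qed.

Lemma mono_eadd n (a b : expo n) : mono K (eadd a b) = mono K a * mono K b.
Proof. by rewrite /mono -big_split; apply: eq_bigr => i _; rewrite ffunE exprD. Qed.

End S.

Unset Implicit Arguments.
Set Strict Implicit.

Theorem theorem5p2 (K : fieldType) (n : nat) (I : mpoly K n -> Prop) (G : seq (expo n)) :
  monomial_ideal I ->
  proper_id I ->
  (exists x, I x /\ x <> 0) ->
  (* G lists (without repetition) the minimal monomial generators of I *)
  uniq G ->
  (forall a : expo n,
      a \in G <-> (I (mono K a) /\ forall b : expo n, I (mono K b) -> expo_le b a -> b = a)) ->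
  (* they form a regular sequence *)
  regular_seq [seq mono K a | a <- G] ->
  @kclean K n 0 I.
Proof.
move=> [A HA] Hprop _ _ HG [_ Hreg].
have EI : I = MI (up A) by rewrite -MI_gen; apply: pext => x; exact: HA.
have HupA : forall b, I (mono K b) <-> up A b by move=> b; rewrite EI; apply: MI_monoP.
have Hdesc : forall N b, (wt b < N)%N -> I (mono K b) -> exists2 g, g \in G & expo_le g b.
  elim=> [//|N IH] b Hb Ib.
  case: (classic (forall c, I (mono K c) -> expo_le c b -> c = b)) => Hmin.
    by exists b; [apply/HG|apply: expo_le_refl].
  have [c Hc] := not_all_ex_not _ _ Hmin.
  have [Ic Hc'] := imply_to_and _ _ Hc.
  have [Hcb Hne] := imply_to_and _ _ Hc'.
  have [g Hg Hgc] := IH c (leq_trans (wt_lt Hcb Hne) (ltnSE Hb)) Ic.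
  by exists g => //; apply: expo_le_trans Hgc Hcb.
have EI' : I = @IL K n G.
  rewrite EI /IL; congr MI; apply: pext => b; split.
    by move/HupA/(Hdesc (wt b).+1 b (ltnSn _)).
  move=> [g /HG [Ig _] Hgb]; apply: (upc_up Hgb); exact/HupA.
have Hnz : forall g, g \in G -> nz g.
  move=> g /HG [Ig _]; apply: NNPP => Hn; apply: Hprop.
  have Eg : g = e0 n.
    apply/ffunP => i; rewrite ffunE; apply/eqP; rewrite -leqn0 leqNgt; apply/negP; exact: (not_ex_all_not _ _ Hn i).
  by rewrite Eg mono_zero in Ig.
pose e := e0 n.
have Hij : forall i j, (i < j)%N -> (j < size G)%N -> disj (nth e G i) (nth e G j).
  move=> i j Hij Hj; apply: NNPP => Hd.
  have [k Hk] := not_all_ex_not _ _ Hd.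
  have [Hk1 Hk2] := not_or_and _ _ Hk.
  set gi := nth e G i; set gj := nth e G j.
  have Hgi : gi \in G by apply: mem_nth; apply: ltn_trans Hj.
  pose c : expo n := [ffun l => (gi l - gj l)%N].
  have Hsz : (j < size [seq mono K a | a <- G])%N by rewrite size_map.
  have Etake : (fun y : mpoly K n => (y \in take j [seq mono K a | a <- G] : Prop)) = @monos K n (fun a => a \in take j G).
    rewrite -map_take; apply: pext => y; split; first by move/mapP => [a Ha ->]; exists a.
    by move=> [a Ha ->]; apply: map_f.
  have := Hreg j Hsz (mono K c); rewrite Etake (nth_map e) // -mono_eadd MI_gen.
  have Hgit : gi \in take j G.
    by rewrite /gi -(nth_take e Hij); apply: mem_nth; rewrite size_take Hj.
  move=> H.
  have /MI_monoP [h Hh Hhc] : MI (up (fun a : expo n => a \in take j G)) (mono K c).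
    apply: H; apply/MI_monoP; exists gi => //.
    by apply/expo_leP => l; rewrite /c !ffunE /gi /gj; lia.
  have [Ih _] := proj1 (HG h) (mem_take Hh).
  have [_ Hmin] := proj1 (HG gi) Hgi.
  have Hci : expo_le c gi by apply/expo_leP => l; rewrite ffunE leq_subr.
  have Ehg := Hmin h Ih (expo_le_trans Hhc Hci).
  move: Hhc; rewrite Ehg => /expo_leP /(_ k); rewrite ffunE /gi /gj; lia.
rewrite EI'; apply: (@KC K n (deg G).+1 G (ltnSn _)); split => // g g' Hg Hg' Hne.
have Hi := Hg; have Hj := Hg'; rewrite -index_mem in Hi; rewrite -index_mem in Hj.
rewrite -(nth_index e Hg) -(nth_index e Hg').
case: (ltngtP (index g G) (index g' G)) => H.
- exact: Hij.
- by move=> l; case: (Hij _ _ H Hi l); [right|left].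
- by case: Hne; rewrite -(nth_index e Hg) -(nth_index e Hg') H.
Qed.
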